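(* Let $n>2k$, $k\ge t+3$, and let $\mathcal F\subseteq\binom{[n]}{k}$ be a $t$-intersecting family with $\tau_t(\mathcal F)=t+2$. Then for every $E\in\binom{[n]}{t+1}$, $$\left|\{T\in\mathcal T_t(\mathcal F): E\subseteq T\}\right|\le k-t+1.$$
   Context: A family is $t$-intersecting if any two members meet in at least $t$ elements. A $t$-cover of $\mathcal F$ is a set $S\subseteq[n]$ with $|S\cap F|\ge t$ for all $F\in\mathcal F$; $\tau_t(\mathcal F)$ is the minimum size of a $t$-cover, and $\mathcal T_t(\mathcal F)$ is the set of all $t$-covers of $\mathcal F$ of size $\tau_t(\mathcal F)$. *)

(* Defs.v *)
From mathcomp Require Import all_boot.
Set Implicit Arguments. Unset Strict Implicit. Unset Printing Implicit Defensive.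

Definition k_uniform (n k : nat) (F : {set {set 'I_n}}) : bool :=
  [forall A in F, #|A| == k].

Definition t_intersecting (n t : nat) (F : {set {set 'I_n}}) : bool :=
  [forall A in F, forall B in F, t <= #|A :&: B|].

Definition t_cover (n t : nat) (F : {set {set 'I_n}}) (S : {set 'I_n}) : bool :=
  [forall A in F, t <= #|S :&: A|].

(* tau_t(F): the minimum size of a t-cover (n.+1 if there is none,
   which cannot happen when the minimum is attained as below). *)
Definition tau_t (n t : nat) (F : {set {set 'I_n}}) : nat :=
  \big[minn/n.+1]_(S : {set 'I_n} | t_cover t F S) #|S|.

Definition T_t (n t : nat) (F : {set {set 'I_n}}) : {set {set 'I_n}} :=
  [set S : {set 'I_n} | t_cover t F S && (#|S| == tau_t t F)].

(* Main.v *)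
Require Import Defs.
From mathcomp Require Import all_boot.
From mathcomp Require Import zify.

Lemma bigmin_le (I : eqType) (r : seq I) (P : pred I) (F : I -> nat) idx j :
  j \in r -> P j -> \big[minn/idx]_(i <- r | P i) F i <= F j.
Proof.
elim: r => //= a r IH; rewrite inE big_cons; case/orP=> [/eqP<-|jr] Pj.
  by rewrite Pj geq_minl.
case: (P a); last exact: IH.
by rewrite (leq_trans (geq_minr _ _)) // IH.
Qed.

Lemma tau_le n t (F : {set {set 'I_n}}) S : t_cover t F S -> tau_t t F <= #|S|.
Proof.
move=> HS; rewrite /tau_t; apply: (@bigmin_le _ _ _ (fun S : {set 'I_n} => #|S|)) => //.
exact: mem_index_enum.
Qed.

Theorem mainTheorem7 (n k t : nat) (F : {set {set 'I_n}}) :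
  2 * k < n -> t + 3 <= k ->
  k_uniform k F -> t_intersecting t F -> tau_t t F = t + 2 ->
  forall E : {set 'I_n}, #|E| = t + 1 ->
    #|[set T in T_t t F | E \subset T]| <= k - t + 1.
Proof.
move=> _ _ Hunif _ Htau E HE.
have : ~~ t_cover t F E.
  apply/negP => /tau_le; rewrite Htau HE; by rewrite addnS ltnn.
case/forallPn => A; rewrite negb_imply => /andP [AF]; rewrite -ltnNge => HEA.
have HA : #|A| = k by move/forall_inP: Hunif => /(_ A AF) /eqP.
have key : forall T, T \in [set T in T_t t F | E \subset T] ->
   exists2 x, x \in A :\: E & (T = E :|: [set x]) /\ t <= #|E :&: A|.+1.
  move=> T; rewrite inE /T_t inE => /andP [/andP [Tc /eqP TS] ET].
  rewrite Htau in TS.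
  have : #|T :\: E| == 1.
    by rewrite cardsD (setIidPr ET) TS HE addn2 addn1 subSnn.
  case/cards1P => x Tx.
  have TE : T = E :|: [set x] by rewrite -Tx -{1}(setID T E) (setIidPr ET).
  have TA : t <= #|E :&: A| + #|[set x] :&: A|.
    move/forall_inP: Tc => /(_ A AF).
    rewrite TE setIUl => H; apply: (leq_trans H); exact: leq_card_setU.
  have xA : x \in A.
    apply/negPn/negP => xA; move: TA.
    have -> : [set x] :&: A = set0.
      by apply/setP => y; rewrite !inE; case: eqP => // ->; rewrite (negbTE xA).
    by rewrite cards0 addn0 leqNgt HEA.
  exists x.
    rewrite inE xA andbT; apply/negP => xE.
    move: Tx => /setP /(_ x); by rewrite !inE xE eqxx.
  split => //; apply: (leq_trans TA); rewrite -addn1 leq_add2l.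
  by rewrite -(cards1 x) subset_leq_card // subsetIl.
case: (leqP t (#|E :&: A|.+1)) => Ht; last first.
  suff -> : [set T in T_t t F | E \subset T] = set0 by rewrite cards0.
  apply/setP => T; rewrite [RHS]inE; apply/negP => /key [x _ [_]].
  by rewrite leqNgt Ht.
have sub : [set T in T_t t F | E \subset T] \subset [set E :|: [set x] | x in A :\: E].
  apply/subsetP => T /key [x xAE [-> _]]; by apply/imsetP; exists x.
apply: (leq_trans (subset_leq_card sub)).
apply: (leq_trans (leq_imset_card _ _)).
rewrite cardsD HA setIC.
lia.
Qed.
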